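(* There is a function $f:\mathbb N\to\mathbb N$ with the following property. Let $G=H\langle a\rangle$ be a finite group, where $H$ is a normal nilpotent subgroup of $G$ and the order of $a$ is coprime to $|H|$. Then $|[H,a]|\le f(|\mathcal R(a)|)$.
   Context: Commutators: $[x,y]=x^{-1}y^{-1}xy$, left-normed, and $[x,{}_n\,y]=[x,y,\dots,y]$ with $y$ repeated $n$ times. $\mathcal R(a)$ denotes the minimal right Engel sink of $a$ in $G$: the smallest subset of $G$ such that for every $x\in G$ the commutators $[a,{}_n\,x]$ lie in it for all sufficiently large $n$. $[H,a]$ denotes the subgroup generated by all $h^{-1}h^{a}$, $h\in H$. *)

(* Defs.v *)
From mathcomp Require Import all_boot all_fingroup all_solvable.
Set Implicit Arguments. Unset Strict Implicit. Unset Printing Implicit Defensive.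
Local Open Scope group_scope.

(* Left-normed iterated commutator [a, _n x] = [a, x, ..., x] (n copies of x),
   with [~ y, x] = y^-1 * x^-1 * y * x (mathcomp's commg). *)
Definition iter_comm (gT : finGroupType) (n : nat) (a x : gT) : gT :=
  iter n (fun y => [~ y, x]) a.

Definition right_engel_sink (gT : finGroupType) (G : {set gT}) (a : gT)
    (S : {set gT}) : Prop :=
  S \subset G /\
  forall x, x \in G -> exists m, forall n, (m <= n)%N -> iter_comm n a x \in S.

Definition is_min_right_engel_sink (gT : finGroupType) (G : {set gT}) (a : gT)
    (R : {set gT}) : Prop :=
  right_engel_sink G a R /\
  forall S : {set gT}, right_engel_sink G a S -> R \subset S.

Definition commg_elt (gT : finGroupType) (H : {set gT}) (a : gT) : {set gT} :=
  <<[set h^-1 * h ^ a | h in H]>>.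

(* Main.v *)
Require Import Defs.
From mathcomp Require Import all_boot all_fingroup all_solvable.
From mathcomp Require Import zify ring.
Set Implicit Arguments. Unset Strict Implicit. Unset Printing Implicit Defensive.
Local Open Scope group_scope.

Section Gen.
Variable gT : finGroupType.
Implicit Types G H K N A : {group gT}.

Lemma three_subgroup_mod G H K N :
  G \subset 'N(N) -> H \subset 'N(N) -> K \subset 'N(N) ->
  [~: G, H, K] \subset N -> [~: H, K, G] \subset N -> [~: K, G, H] \subset N.
Proof.
move=> nG nH nK h1 h2.
have nC : forall X Y : {group gT}, X \subset 'N(N) -> Y \subset 'N(N) ->
   [~: X, Y] \subset 'N(N).
  move=> X Y nX nY; apply: subset_trans (der1_subG _); exact: commgSS.
have nKG := nC _ _ nK nG; have nHK := nC _ _ nH nK; have nGH := nC _ _ nG nH.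
rewrite -quotient_sub1; last exact: nC.
move: h1 h2; rewrite -(quotient_sub1 (nC _ _ nGH nK)) -(quotient_sub1 (nC _ _ nHK nG)).
rewrite !quotientR //.
move=> /trivgP h1 /trivgP h2; apply/trivgP.
exact: three_subgroup.
Qed.

Lemma lcn_comm K i j :
  [~: 'L_i.+1(K), 'L_j.+1(K)] \subset 'L_(i + j).+2(K).
Proof.
elim: j i => [|j IH] i.
  by rewrite addn0 lcnSn.
have nL : forall n, 'L_n(K) \subset 'N('L_(i + j.+1).+2(K)).
  move=> n; apply: subset_trans (lcn_sub n K) _.
  exact: normal_norm (lcn_normal _ _).
rewrite lcnSn commGC.
apply: three_subgroup_mod => //; try exact: nL.
- exact: (nL 1%N).
- rewrite (commGC (gval K)) -lcnSn.
  by have := IH i.+1; rewrite addSnnS.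
- apply: subset_trans (commSg _ (IH i)) _.
  by rewrite -lcnSn addnS.
Qed.

Lemma commGA_id H A :
  A \subset 'N(H) -> coprime #|H| #|A| -> solvable H ->
  [~: [~: H, A], A] = [~: H, A].
Proof.
move=> nHA coHA solH.
have sKH : [~: H, A] \subset H by rewrite commg_subl.
have nKA : A \subset 'N([~: H, A]) by exact: commg_normr.
have nKH : H \subset 'N([~: H, A]) by exact: commg_norml.
apply/eqP; rewrite eqEsubset commg_subl nKA /=.
have eqC : 'C_H(A) / [~: H, A] = H / [~: H, A].
  rewrite coprime_quotient_cent //; apply/setIidPl.
  exact: quotient_cents2r.
have sHCK : H \subset 'C_H(A) * [~: H, A].
  have : H \subset [~: H, A] * 'C_H(A) by rewrite -quotientSK // -eqC.
  by rewrite -normC // (subset_trans (subsetIl _ _) nKH).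
rewrite gen_subG; apply/subsetP => z /imset2P[h y Hh Ay ->].
have := subsetP sHCK h Hh => /mulsgP[c k Cc Kk ->].
rewrite commMgJ.
have -> : [~ c, y] = 1.
  apply/eqP/commgP; move: Cc => /setIP[_ /centP Cc]; first [exact: Cc y Ay | exact: commute_sym (Cc y Ay)].
by rewrite conj1g mul1g mem_commg.
Qed.

Lemma idx_mono H G (C : {group gT}) : H \subset G ->
  #|H : C| <= #|G : C| /\ (#|H * (G :&: C)| < #|G| -> #|H : C| < #|G : C|).
Proof.
move=> sHG.
have e1 := Lagrange (subsetIl H C).
have e2 := Lagrange (subsetIl G C).
have e3 := mul_cardG H (G :&: C)%G.
have eI : H :&: (G :&: C) = H :&: C.
  by rewrite setIA (setIidPl sHG).
rewrite /= eI in e3.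
have hP : #|H * (G :&: C)| <= #|G|.
  by apply: subset_leq_card; rewrite mul_subG // subsetIl.
rewrite -(indexgI H C) -(indexgI G C).
have p1 : 0 < #|H :&: C| by exact: cardG_gt0.
have p2 : 0 < #|G :&: C| by exact: cardG_gt0.
set x := #|H : _|; set y := #|G : _|; set a := #|H :&: C|; set b := #|G :&: C|.
move: e1 e2 e3 hP; rewrite -/x -/y -/a -/b => e1 e2 e3 hP.
have k1 : (a * b * x = #|(H * (G :&: C))%g| * a)%N by rewrite -e3 -e1; ring.
have k2 : (a * b * y = #|G| * a)%N by rewrite -e2; ring.
have pab : (0 < a * b)%N by rewrite muln_gt0 p1 p2.
split.
  by rewrite -(leq_pmul2l pab) k1 k2 leq_pmul2r.
move=> hlt.
by rewrite -(ltn_pmul2l pab) k1 k2 ltn_pmul2r.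
Qed.

Lemma card_mulG_leq (X Y : {group gT}) : #|(X * Y)%g| <= (#|X| * #|Y|)%N.
Proof.
rewrite mul_cardG; apply: leq_pmulr; exact: cardG_gt0.
Qed.

Lemma card_gen_comm (s : seq gT) n : 0 < n ->
  {in s &, forall x y, commute x y} -> {in s, forall x, x ^+ n = 1} ->
  #|<<[set x in s]>>| <= n ^ size s.
Proof.
move=> hn; elim: s => [|x s IH] hc he.
  have -> : [set x in [::]] = set0 :> {set gT} by apply/setP => y; rewrite !inE.
  by rewrite gen0 cards1.
have hc' : {in s &, forall x y, commute x y}.
  by move=> y z ys zs; apply: hc; rewrite inE ?ys ?zs orbT.
have he' : {in s, forall x, x ^+ n = 1}.
  by move=> y ys; apply: he; rewrite inE ys orbT.
have IH' := IH hc' he'.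
set S' := [set y in s].
have cx : <[x]> \subset 'C(<<S'>>).
  rewrite cent_gen cycle_subG; apply/centP => y; rewrite inE => ys.
  apply: commute_sym; apply: hc; rewrite ?inE ?ys ?eqxx ?orbT //.
have sub : <<[set y in x :: s]>> \subset <[x]> * <<S'>>.
  rewrite -comm_joingE; last exact: centC.
  rewrite gen_subG; apply/subsetP => y; rewrite inE => /orP[/eqP -> | ys].
    by rewrite (subsetP (joing_subl _ _)) ?cycle_id.
  by rewrite (subsetP (joing_subr _ _)) // mem_gen // inE.
apply: leq_trans (subset_leq_card sub) _.
apply: leq_trans (card_mulG_leq _ _) _.
rewrite /= expnS; apply: leq_mul => //.
by rewrite dvdn_leq // order_dvdn he ?inE ?eqxx.
Qed.

Lemma comm_central_bound (Q X : {group gT}) :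
  X \subset Q -> Q \subset 'N(X) -> [~: X, Q] \subset 'Z(Q) ->
  #|[~: X, Q]| <= #|X : [~: X, Q]| ^ (#|X : [~: X, Q]| * #|Q : [~: X, Q]|).
Proof.
move=> sXQ nXQ hZ.
set Y := [~: X, Q].
have sYX : Y \subset X by rewrite commg_subl.
have sYQ : Y \subset Q by move: hZ; rewrite subsetI => /andP[].
have cYQ : Y \subset 'C(Q) by move: hZ; rewrite subsetI => /andP[].
have cen : forall y z, y \in Y -> z \in Q -> commute y z.
  by move=> y z Yy Qz; apply: (centsP cYQ).
have nYX : X \subset 'N(Y).
  apply: subset_trans sXQ _; apply: cents_norm; by rewrite centsC.
set n := #|X : Y|.
have n_gt0 : 0 < n by exact: indexg_gt0.
set S := [set [~ x, y] | x in X, y in Q].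
have YS : Y = <<S>> by [].
have hexp : forall s, s \in S -> s ^+ n = 1.
  move=> s /imset2P[x y Xx Qy ->].
  have Qx : x \in Q := subsetP sXQ x Xx.
  have Yxy : [~ x, y] \in Y by exact: mem_commg.
  rewrite -commXg; last exact: commute_sym (cen _ _ Yxy Qx).
  have Yxn : x ^+ n \in Y.
    have Nx : x \in 'N(Y) := subsetP nYX x Xx.
    apply: coset_idr; first exact: groupX.
    rewrite morphX //= /n -card_quotient //.
    exact: expg_cardG (mem_quotient _ Xx).
  by apply/eqP/commgP; exact: cen.
have hS : #|S| <= n * #|Q : Y|.
  set F := fun p : {set gT} * {set gT} => [~ repr p.1, repr p.2].
  have : S \subset F @: setX (rcosets Y X) (rcosets Y Q).
    apply/subsetP => s /imset2P[x y Xx Qy ->].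
    apply/imsetP; exists (Y :* x, Y :* y).
      by rewrite inE /=; apply/andP; split; apply/rcosetsP; [exists x | exists y].
    rewrite /F /=.
    have /rcosetP[y1 Yy1 ->] := mem_repr_rcoset Y x.
    have /rcosetP[y2 Yy2 ->] := mem_repr_rcoset Y y.
    have Qx : x \in Q := subsetP sXQ x Xx.
    have Qy2y : y2 * y \in Q by rewrite groupM // (subsetP sYQ).
    rewrite commMgJ.
    have -> : [~ y1, y2 * y] = 1 by apply/eqP/commgP; exact: cen.
    rewrite conj1g mul1g commgMJ.
    have -> : [~ x, y2] = 1.
      by apply/eqP/commgP; exact: commute_sym (cen _ _ Yy2 Qx).
    by rewrite conj1g mulg1.
  move/subset_leq_card => h; apply: leq_trans h _.
  by apply: leq_trans (leq_imset_card _ _) _; rewrite cardsX.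
have hgen := @card_gen_comm (enum S) n n_gt0.
rewrite set_enum -cardE -YS in hgen.
apply: leq_trans (hgen _ _) _.
- move=> x y; rewrite !mem_enum => Sx Sy.
  apply: cen; first by rewrite YS mem_gen.
  by apply: (subsetP sYQ); rewrite YS mem_gen.
- by move=> x; rewrite mem_enum; exact: hexp.
exact: leq_pexp2l.
Qed.

Lemma SL (G M N : {group gT}) (a : gT) (R : {set gT}) :
  right_engel_sink G a R -> a \in G -> M \subset G -> N \subset M ->
  M \subset 'N(N) -> a \in 'N(M) -> a \in 'N(N) -> abelian (M / N) ->
  coprime #|M| #[a] ->
  #|M / N| <= #|'C_(M / N)[coset N a]| * #|R|.
Proof.
move=> [sRG hR] Ga sMG sNM nNM nMa nNa abV coMa.
set V := (M / N)%G; set b := coset N a.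
have nVb : b \in 'N(V).
  have : <[a]> / N \subset 'N(M / N).
    by apply: quotient_norms; rewrite cycle_subG.
  by move/subsetP; apply; apply: mem_quotient; exact: cycle_id.
have cV : forall w, w \in V -> [~ w, b] \in V.
  by move=> w Vw; rewrite commgEl groupM ?groupV // memJ_norm.
have comV : forall x y, x \in V -> y \in V -> commute x y.
  by move=> x y Vx Vy; apply: (centsP abV).
have fM : {in V &, {morph (fun w => [~ w, b]) : x y / x * y}}.
  move=> x y Vx Vy /=; rewrite commMgJ; congr (_ * _).
  by apply/conjg_fixP/commgP; apply: comV; rewrite ?cV.
pose fm := Morphism fM.
have fmE : forall w, fm w = [~ w, b] by [].
have hcard : #|V| = (#|'C_V[b]| * #|fm @* V|)%N.
  rewrite card_morphim setIid -indexgI.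
  have -> : V :&: 'ker fm = 'C_V[b].
    apply/setP => x; rewrite !in_setI.
    case Vx : (x \in V) => //=.
    apply/idP/idP => [hk | /cent1P/commgP hc].
      by rewrite !inE in hk; apply/cent1P/commgP.
    by rewrite !inE.
  by rewrite Lagrange // subsetIl.
rewrite hcard leq_mul2l; apply/orP; right.
apply: leq_trans (leq_imset_card (coset N) R).
apply: subset_leq_card.
rewrite morphimEdom; apply/subsetP => u /imsetP[w Vw ->] {u}.
set W := [~: V, <[b]>]%G.
have sWV : W \subset V by rewrite commg_subl cycle_subG.
have fW : {homo (fun w => [~ w, b]) : x / x \in W}.
  by move=> x Wx; rewrite mem_commg ?(subsetP sWV) ?cycle_id.
have coVb : coprime #|V| #|<[b]>|.
  apply: (coprime_dvdl (m := #|V|) (n := #|M|)).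
    by rewrite /V /= card_quotient // dvdn_indexg.
  apply: (coprime_dvdr (n := #[a])) => //.
  exact: (morph_order (coset_morphism N) nNa).
have nVB : <[b]> \subset 'N(V) by rewrite cycle_subG.
have TI := coprime_abel_cent_TI nVB coVb abV.
have injW : {in W &, injective (fun w => [~ w, b])}.
  move=> x y Wx Wy /= exy.
  have Vx := subsetP sWV x Wx; have Vy := subsetP sWV y Wy.
  have h1 : fm (x * y^-1) = 1.
    by rewrite morphM ?groupV // morphV // !fmE exy mulgV.
  have : x * y^-1 \in 'C_W(<[b]>).
    rewrite inE groupM ?groupV //= cent_cycle.
    by apply/cent1P/commgP; rewrite -fmE h1.
  by rewrite TI => /set1gP /eqP; rewrite -eq_mulgV1 => /eqP.
have Wfw : [~ w, b] \in W by rewrite mem_commg ?cycle_id.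
have hp := iter_order_in fW injW Wfw.
set p := fingraph.order _ _ in hp.
have p_gt0 : 0 < p by exact: fingraph.order_gt0.
have hpk : forall k, iter (p * k) (fun w => [~ w, b]) [~ w, b] = [~ w, b].
  elim => [|k IH]; first by rewrite muln0.
  by rewrite mulnS iterD IH hp.
case/morphimP: Vw => v Nv Mv defw.
have Gv : v \in G := subsetP sMG v Mv.
have Nv' : v \in 'N(M) := subsetP (normG M) v Mv.
set x := a * v^-1.
have Gx : x \in G by rewrite groupM ?groupV.
have nMx : x \in 'N(M) by rewrite groupM ?groupV.
have nNx : x \in 'N(N) by rewrite groupM ?groupV.
have Vw : w \in V by rewrite defw mem_quotient.
have claim : forall n, iter_comm n.+1 a x \in M /\
    coset N (iter_comm n.+1 a x) = iter n (fun w => [~ w, b]) [~ w, b].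
  elim => [|n [IHM IHc]].
    rewrite /iter_comm /= /x commgMJ commgg conj1g mulg1 -invgR.
    have Mc : [~ v^-1, a] \in M.
      by rewrite commgEl groupM ?groupV ?memJ_norm ?groupV.
    split; first by rewrite groupV.
    have Nc : [~ v^-1, a] \in 'N(N) := subsetP nNM _ Mc.
    rewrite morphV // morphR ?groupV //= -/b morphV //= -defw.
    by rewrite -[[~ w^-1, b]]fmE morphV // fmE invgK.
  rewrite /iter_comm iterS -/(iter_comm n.+1 a x).
  set s := iter_comm n.+1 a x in IHM IHc *.
  split; first by rewrite commgEl groupM ?groupV ?memJ_norm.
  have Ns : s \in 'N(N) := subsetP nNM _ IHM.
  rewrite morphR // /x morphM ?groupV // morphV // -/b -defw.
  have -> : coset_morphism N s = coset N s by [].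
  have -> : coset_morphism N a = b by [].
  rewrite IHc iterS.
  set t := iter n _ _.
  have Vt : t \in V by rewrite /t -IHc mem_quotient.
  rewrite commgMJ.
  have -> : [~ t, w^-1] = 1 by apply/eqP/commgP; apply: comV; rewrite ?groupV.
  rewrite mul1g; apply/conjg_fixP/commgP; apply: comV; rewrite ?groupV ?cV //.
have [m0 hm0] := hR x Gx.
have hle : m0 <= (p * m0).+1.
  by apply: leq_trans (leq_pmull m0 p_gt0) (leqnSn _).
have Rs := hm0 _ hle.
have [_ cs] := claim (p * m0)%N.
rewrite hpk in cs.
by rewrite fmE; apply/imsetP; exists (iter_comm (p * m0)%N.+1 a x).
Qed.

Lemma lcn_alt K A k : A \subset 'N(K) -> [~: K, A] = K ->
  [~: 'L_k.+1(K), A] \subset 'L_k.+2(K) -> [~: 'L_k.+2(K), A] \subset 'L_k.+3(K) ->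
  'L_k.+2(K) \subset 'L_k.+3(K).
Proof.
move=> nKA eKA h1 h2.
have nL : forall n, 'L_n(K) \subset 'N('L_k.+3(K)).
  move=> n; apply: subset_trans (lcn_sub n K) _.
  exact: normal_norm (lcn_normal _ _).
rewrite lcnSn commGC.
have -> : [~: K, 'L_k.+1(K)] = [~: [~: K, A], 'L_k.+1(K)] by rewrite eKA.
apply: three_subgroup_mod.
- exact: char_norm_trans (lcn_char _ _) nKA.
- exact: nL.
- exact: (nL 1%N).
- rewrite (commGC A); apply: subset_trans (commSg _ h1) _.
  by rewrite -lcnSn.
- by rewrite -lcnSn.
Qed.

Lemma lcn_step_ne K j : nilpotent K -> j < nil_class K ->
  ~~ ('L_j.+1(K) \subset 'L_j.+2(K)).
Proof.
move=> nilK hj.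
have ne1 : 'L_j.+1(K) != 1 :> {set gT}.
  apply/eqP => /(lcn_nil_classP j nilK); rewrite leqNgt hj.
  by [].
have nK : K \subset 'N_K('L_j.+1(K)).
  by rewrite subsetI subxx normal_norm ?lcn_normal.
have := nil_comm_properl nilK (lcn_sub _ _) ne1 nK.
by rewrite -lcnSn properE => /andP[].
Qed.

Lemma mm_strict K A j : A \subset 'N(K) ->
  ~~ ([~: 'L_j(K), A] \subset 'L_j.+1(K)) ->
  #|'L_j.+1(K) : 'C(A)| < #|'L_j(K) : 'C(A)|.
Proof.
move=> nKA hn.
have [_ hs] := idx_mono ('C(A))%G (lcn_subS j K).
apply: hs; rewrite ltnNge; apply/negP => hge.
move/negP: hn; apply.
have sP : 'L_j.+1(K) * ('L_j(K) :&: 'C(A)) \subset 'L_j(K).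
  by rewrite mul_subG ?lcn_subS ?subsetIl.
have eqP' : 'L_j.+1(K) * ('L_j(K) :&: 'C(A)) = 'L_j(K).
  by apply/eqP; rewrite eqEcard sP hge.
have nLA : A \subset 'N('L_j.+1(K)) := char_norm_trans (lcn_char _ _) nKA.
have nLL : 'L_j(K) \subset 'N('L_j.+1(K)).
  by apply: subset_trans (lcn_sub _ _) (normal_norm (lcn_normal _ _)).
rewrite gen_subG; apply/subsetP => z /imset2P[x y Lx Ay ->].
move: Lx; rewrite -eqP' => /mulsgP[l c Ll /setIP[Lc Cc] ->].
rewrite commMgJ.
have -> : [~ c, y] = 1.
  apply/eqP/commgP; move/centP: Cc => Cc.
  first [exact: Cc y Ay | exact: commute_sym (Cc y Ay)].
rewrite mulg1 memJ_norm ?(subsetP nLL) //.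
have : [~: 'L_j.+1(K), A] \subset 'L_j.+1(K) by rewrite commg_subl.
by move/subsetP; apply; rewrite mem_commg.
Qed.

End Gen.

Definition gg (B : nat) : nat := (B * B ^ (B * B))%N.
Definition ff (r : nat) : nat := iter (4 * r + 4) gg r.

Lemma half_bounds n : (n./2 + n./2 <= n)%N /\ (n <= n./2 + n./2 + 1)%N.
Proof.
have e := odd_double_half n; rewrite -addnn in e.
case: (odd n) e => /= e; lia.
Qed.

Lemma ar1 c : c < (c./2 + c./2).+2.
Proof. have [h1 h2] := half_bounds c; lia. Qed.

Lemma ar2 h c k : (h.+1 + 2 * k.+1 <= c.+1)%N -> (h.+1 + 2 * k <= c.+1)%N.
Proof. lia. Qed.

Lemma ar_e h k : (h.+1 + 2 * k.+1 = (h + 2 * k).+3)%N.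
Proof. lia. Qed.

Lemma ar_e' h k : (h.+1 + 2 * k = (h + 2 * k).+1)%N.
Proof. lia. Qed.

Lemma ar_step h c k : (h.+1 + 2 * k.+1 <= c.+1)%N -> (h + 2 * k).+1 < c.
Proof. lia. Qed.

Lemma ar3 x y z k : (x + k <= z)%N -> y.+1 <= x -> (y + k.+1 <= z)%N.
Proof. lia. Qed.

Lemma ar_cond c : (c./2.+1 + 2 * (c - c./2)./2 <= c.+1)%N.
Proof.
have [h1 h2] := half_bounds c; have [k1 k2] := half_bounds (c - c./2); lia.
Qed.

Lemma ar_final c r : ((c - c./2)./2 <= r)%N -> (c <= 4 * r + 3)%N.
Proof.
have [h1 h2] := half_bounds c; have [k1 k2] := half_bounds (c - c./2); lia.
Qed.

Lemma ar4 c r : (c.+1 <= 4 * r + 3)%N -> (c <= 4 * r + 4)%N.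
Proof. lia. Qed.

Lemma gg_ge x : x <= gg x.
Proof.
rewrite /gg; case: x => // x; apply: leq_pmulr; by rewrite expn_gt0.
Qed.

Lemma gg_mono x y : x <= y -> gg x <= gg y.
Proof.
rewrite /gg => hxy; case: x hxy => [|x] hxy; first by [].
apply: leq_mul => //.
apply: (@leq_trans (y ^ (x.+1 * x.+1))).
  by rewrite leq_exp2r ?muln_gt0.
by apply: leq_pexp2l; [apply: leq_trans hxy | apply: leq_mul].
Qed.

Lemma iter_gg_ge d x : x <= iter d gg x.
Proof. elim: d => //= d IH; exact: leq_trans IH (gg_ge _). Qed.

Lemma iter_gg_mono d x y : x <= y -> iter d gg x <= iter d gg y.
Proof. move=> h; elim: d => //= d IH; exact: gg_mono. Qed.

Lemma iter_gg_count d e x : d <= e -> iter d gg x <= iter e gg x.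
Proof.
move=> hde; rewrite -(subnK hde) iterD; exact: iter_gg_ge.
Qed.

Theorem lemma2p3 :
  exists f : nat -> nat,
    forall (gT : finGroupType) (G H : {group gT}) (a : gT) (R : {set gT}),
      H <| G -> nilpotent H -> (H * <[a]>)%g = G ->
      coprime #[a] #|H| ->
      is_min_right_engel_sink G a R ->
      #|commg_elt H a| <= f #|R|.
Proof.
exists ff => gT G H a R nHG nilH defG coaH [sinkR _].
set A := <[a]>%G.
have Ga : a \in G.
  rewrite -defG; apply/mulsgP; exists 1 a; rewrite ?group1 ?cycle_id ?mul1g //.
have sHG : H \subset G by rewrite -defG mulG_subl.
have sAG : A \subset G by rewrite cycle_subG.
have nHA : A \subset 'N(H) := subset_trans sAG (normal_norm nHG).
set K := [~: H, A]%G.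
have sKH : K \subset H by rewrite commg_subl.
have nKA : A \subset 'N(K) by exact: commg_normr.
have coHA : coprime #|H| #|A| by rewrite coprime_sym.
have coKA : coprime #|K| #|A| := coprime_dvdl (cardSg sKH) coHA.
have solH := nilpotent_sol nilH.
have eKA : [~: K, A] = K := commGA_id nHA coHA solH.
have nilK : nilpotent K := nilpotentS sKH nilH.
have sKG : K \subset G := subset_trans sKH sHG.
have hsub : commg_elt H a \subset K.
  rewrite gen_subG; apply/subsetP => z /imsetP[h Hh ->].
  by rewrite -commgEl mem_commg ?cycle_id.
apply: leq_trans (subset_leq_card hsub) _.
set r := #|R|.
have coM : forall M : {group gT}, M \subset K -> coprime #|M| #[a].
  by move=> M sMK; exact: coprime_dvdl (cardSg sMK) coKA.
have nLa : forall j, a \in 'N('L_j(K)).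
  move=> j; apply: (subsetP (char_norm_trans (lcn_char j K) nKA)); exact: cycle_id.
have nLA : forall j, A \subset 'N('L_j(K)).
  by move=> j; apply: char_norm_trans (lcn_char j K) nKA.
have nLK : forall i j, 'L_i(K) \subset 'N('L_j(K)).
  move=> i j; apply: subset_trans (lcn_sub i K) _.
  exact: normal_norm (lcn_normal _ _).
have Ka : a \in 'N(K) by apply: (subsetP nKA); exact: cycle_id.
have B2 : #|K : 'L_2(K)| <= r.
  set L2 := 'L_2(K)%G.
  have sL2K : L2 \subset K := lcn_sub 2 K.
  have nL2K : K \subset 'N(L2) := normal_norm (lcn_normal 2 K).
  have abQ : abelian (K / L2) by rewrite /L2 /= lcn2; exact: (der_abelian 0 K).
  have h := SL sinkR Ga sKG sL2K nL2K Ka (nLa 2) abQ (coM K (subxx _)).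
  have eC : 'C_(K / L2)[coset L2 a] = 1.
    rewrite -cent_cycle -quotient_cycle ?nLa //.
    have TI := coprime_abel_cent_TI (quotient_norms L2 nKA)
      (coprime_morph (coset_morphism L2) coKA) (abQ).
    have eQ : [~: K / L2, A / L2] = K / L2.
      by rewrite -quotientR ?eKA // (nLA 2).
    by rewrite /= eQ in TI.
  by rewrite eC cards1 mul1n card_quotient in h.
set c := nil_class K.
have hcK : nil_class K = c by [].
clearbody c.
have Lc1 : 'L_c.+1(K) = 1 by apply/(lcn_nil_classP c nilK); rewrite hcK.
pose mm j := #|'L_j(K) : 'C(A)|.
have mm_mono : forall j, mm j.+1 <= mm j.
  by move=> j; exact: (idx_mono ('C(A))%G (lcn_subS j K)).1.
have step : forall j', j'.+1 < c -> (mm j'.+3).+1 <= mm j'.+1.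
  move=> j' hj.
  case h1 : ([~: 'L_j'.+1(K), A] \subset 'L_j'.+2(K)).
    case h2 : ([~: 'L_j'.+2(K), A] \subset 'L_j'.+3(K)).
      have := lcn_alt nKA eKA h1 h2.
      have hj' : j'.+1 < nil_class K by rewrite hcK.
      by rewrite (negbTE (lcn_step_ne nilK hj')).
    have := mm_strict (j := j'.+2) nKA (negbT h2).
    by move=> h; apply: leq_trans h (mm_mono _).
  have := mm_strict (j := j'.+1) nKA (negbT h1).
  by move=> h; apply: leq_trans h; rewrite ltnS; exact: mm_mono.
have [hc1 hc2] := half_bounds c.
have abLi : abelian 'L_(c./2).+1(K).
  apply/commG1P; apply/trivgP.
  apply: subset_trans (lcn_comm K c./2 c./2) _; rewrite -Lc1; apply: lcn_sub_leq.
  exact: ar1.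
have mmi : mm c./2.+1 <= r.
  set L := 'L_(c./2).+1(K)%G.
  have sLK : L \subset K := lcn_sub _ K.
  have a1 : a \in 'N(1) by rewrite norm1 inE.
  have h := SL sinkR Ga (subset_trans sLK sKG) (sub1G L) (norms1 L) (nLa _) a1
     (quotient_abelian _ abLi) (coM L sLK).
  have coLA : coprime #|L| #|A| := coprime_dvdl (cardSg sLK) coKA.
  have solL : solvable L := nilpotent_sol (nilpotentS sLK nilK).
  rewrite -cent_cycle -quotient_cycle // -coprime_quotient_cent ?sub1G ?norms1 // in h.
  rewrite !card_quotient ?norms1 // !indexg1 in h.
  have e := Lagrange (subsetIl L 'C(A)).
  rewrite /mm -/L -indexgI.
  rewrite -e in h.
  by rewrite -(leq_pmul2l (cardG_gt0 ('C_L(A))%G)).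
have iterk : forall k, (c./2.+1 + 2 * k <= c.+1)%N ->
    (mm (c./2.+1 + 2 * k) + k <= mm c./2.+1)%N.
  elim => [|k IH] hk; first by rewrite muln0 !addn0.
  have := IH (ar2 hk).
  rewrite ar_e ar_e' => h1.
  exact: ar3 h1 (step _ (ar_step hk)).
have hc : (c <= 4 * r + 3)%N.
  apply: ar_final.
  have := iterk _ (ar_cond c).
  move=> h; apply: leq_trans mmi; exact: leq_trans (leq_addl _ _) h.
have size : forall t, #|K : 'L_t.+2(K)| <= iter t gg r.
  elim => [|t IH]; first exact: B2.
  rewrite -(Lagrange_index (lcn_sub t.+2 K) (lcn_subS t.+2 K)).
  set B := #|K : 'L_t.+2(K)| in IH *.
  have nL3 : forall i, 'L_i(K) \subset 'N('L_t.+3(K)) := fun i => nLK i t.+3.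
  have nKL3 : K \subset 'N('L_t.+3(K)) := normal_norm (lcn_normal _ _).
  have eY : [~: 'L_t.+1(K) / 'L_t.+3(K), K / 'L_t.+3(K)] = 'L_t.+2(K) / 'L_t.+3(K).
    by rewrite -quotientR ?nL3 // -lcnSn.
  have hD := @comm_central_bound _ (K / 'L_t.+3(K))%G ('L_t.+1(K) / 'L_t.+3(K))%G
     (quotientS _ (lcn_sub _ _)) (quotient_norms _ (normal_norm (lcn_normal _ _)))
     (ltac:(rewrite eY; exact: lcn_central t.+2 K)).
  rewrite /= eY in hD.
  rewrite card_quotient ?nL3 // in hD.
  rewrite !index_quotient_eq ?nL3 ?lcn_subS ?lcn_sub ?subIset ?lcn_subS ?orbT // in hD.
  have B_gt0 : 0 < B := indexg_gt0 _ _.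
  set n := #|'L_t.+1(K) : 'L_t.+2(K)| in hD.
  have n_gt0 : 0 < n := indexg_gt0 _ _.
  have hn : n <= B.
    by rewrite dvdn_leq // indexSg ?lcn_subS ?lcn_sub.
  apply: leq_trans (gg_mono IH); rewrite /gg.
  apply: leq_mul (leqnn B) _; apply: leq_trans hD _.
  apply: (@leq_trans (B ^ (n * B))).
    by rewrite leq_exp2r // muln_gt0 n_gt0 B_gt0.
  by apply: leq_pexp2l B_gt0 _; apply: leq_mul hn (leqnn B).
have r_gt0 : 0 < r := leq_trans (indexg_gt0 _ _) B2.
have hK : #|K| = #|K : 'L_c.+1(K)| by rewrite Lc1 indexg1.
rewrite /ff; case: c hK hc {Lc1 hcK step abLi mmi iterk hc1 hc2} => [|c'] hK hc.
  rewrite hK indexgg.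
  exact: leq_trans r_gt0 (iter_gg_ge _ _).
rewrite hK; apply: leq_trans (size c') _.
apply: iter_gg_count.
exact: ar4 hc.
Qed.
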